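(* Let $k\le l$ be positive integers with $\gcd(k,l)=1$, let $n\ge 1$ and $m\ge 0$ be integers, and write $m=qn+r$ with integers $q\ge 0$ and $0\le r<n$. Let $x,y$ be integers satisfying $x\ge rk$, $y\ge rl$ and $qxy+r(xl+yk)\ge klnr$, chosen so that $x+y$ is the smallest possible among all such pairs. Then $$L^{k,l}(m,n)\ge \min\bigl(nk(q+1),\ nkq+x+y\bigr).$$
   Context: $\mathcal D^{k,l}(m,n)$ denotes the set of all $nk\times nl$ matrices with nonnegative integer entries all of whose row sums equal $ml$ and all of whose column sums equal $mk$. For an $s\times t$ matrix $A=(a_{ij})$ with $s\le t$, a transversal of $A$ is a set of entries $T=\{a_{1i_1},\dots,a_{si_s}\}$ with $i_1,\dots,i_s\in\{1,\dots,t\}$ pairwise distinct, and $|T|=a_{1i_1}+\cdots+a_{si_s}$; if $s>t$, the transversals of $A$ are those of its transpose. The tropical determinant is ${\rm tdet}(A)=\max_T|T|$ over all transversals $T$ of $A$, and $L^{k,l}(m,n)=\min_{A\in\mathcal D^{k,l}(m,n)}{\rm tdet}(A)$. *)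

(* Defs.v *)
From mathcomp Require Import all_boot all_algebra.
Set Implicit Arguments. Unset Strict Implicit. Unset Printing Implicit Defensive.

(* For s <= t a transversal
   picks one entry in each row, in pairwise distinct columns (an injective
   map rows -> columns); for s > t we use the transpose (an injective map
   columns -> rows). *)
Definition tdet (s t : nat) (A : 'M[nat]_(s, t)) : nat :=
  if s <= t then
    \max_(f : {ffun 'I_s -> 'I_t} | injectiveb f) \sum_(i < s) A i (f i)
  else
    \max_(f : {ffun 'I_t -> 'I_s} | injectiveb f) \sum_(j < t) A (f j) j.

Definition inD (k l m n : nat) (A : 'M[nat]_(n * k, n * l)) : Prop :=
  (forall i : 'I_(n * k), \sum_(j < n * l) A i j = m * l) /\
  (forall j : 'I_(n * l), \sum_(i < n * k) A i j = m * k).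
Arguments inD k l m n A : clear implicits.
Arguments tdet {s t} A.

(* Main.v *)
Require Import Defs.
From mathcomp Require Import all_boot all_algebra.
From mathcomp Require Import all_order zify ring.
Set Implicit Arguments. Unset Strict Implicit. Unset Printing Implicit Defensive.

Section Hall.
Variables (I J : finType) (j0 : J).

Definition nbr (G : I -> J -> bool) (S : {set I}) : {set J} :=
  [set j | [exists i in S, G i j]].

Lemma nbrP (G : I -> J -> bool) (S : {set I}) j : reflect (exists2 i, i \in S & G i j) (j \in nbr G S).
Proof.
rewrite inE; apply: (iffP existsP) => [[i /andP[]] | [i Si Gij]]; first by exists i.
by exists i; rewrite Si.
Qed.

Lemma hall_gen n : forall (R : {set I}) (G : I -> J -> bool), #|R| <= n ->
  (forall S : {set I}, S \subset R -> #|S| <= #|nbr G S|) ->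
  exists f : I -> J, {in R &, injective f} /\ (forall i, i \in R -> G i (f i)).
Proof.
elim: n => [|n IH] R G cR HG.
  have R0 : R = set0 by apply/eqP; rewrite -cards_eq0; lia.
  by exists (fun _ => j0); split => [i|i]; rewrite R0 inE.
have [R0|[i0 Ri0]] := set_0Vmem R.
  by exists (fun _ => j0); split => [i|i]; rewrite R0 inE.
case: (boolP [exists S : {set I}, [&& S \proper R, S != set0 & #|nbr G S| <= #|S|]]).
- case/existsP => S0 /and3P[pS0 nS0 tS0].
  have sS0 := proper_sub pS0.
  have cS0 := proper_card pS0.
  have [f1 [inj1 G1]] : exists f : I -> J, {in S0 &, injective f} /\
     (forall i, i \in S0 -> G i (f i)).
    apply: IH; first lia.
    by move=> S sS; apply: HG; apply: subset_trans sS sS0.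
  pose G2 i j := G i j && (j \notin nbr G S0).
  have [f2 [inj2 G2f]] : exists f : I -> J, {in R :\: S0 &, injective f} /\
     (forall i, i \in R :\: S0 -> G2 i (f i)).
    apply: IH.
      have : 0 < #|S0| by rewrite card_gt0.
      have := cardsD R S0; rewrite (setIidPr sS0). lia.
    move=> S sS.
    have dS : [disjoint S & S0].
      rewrite -setI_eq0; apply/eqP/setP => i; rewrite !inE.
      apply/negP => /andP[iS iS0]; move/subsetP: sS => /(_ i iS).
      by rewrite inE iS0.
    have h1 := HG (S :|: S0).
    have h2 : S :|: S0 \subset R.
      rewrite subUset sS0 andbT; apply: subset_trans sS _; exact: subsetDl.
    have h3 := cardsU S S0.
    have h4 : S :&: S0 = set0 by apply/eqP; rewrite setI_eq0.
    rewrite h4 cards0 in h3.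
    have h5 : nbr G (S :|: S0) \subset nbr G2 S :|: nbr G S0.
      apply/subsetP => j /nbrP [i]; rewrite inE => /orP[iS|iS0] Gij.
        rewrite inE; case: (boolP (j \in nbr G S0)) => jN; first by rewrite orbT.
        by apply/orP; left; apply/nbrP; exists i => //; rewrite /G2 Gij jN.
      by rewrite inE; apply/orP; right; apply/nbrP; exists i.
    have h6 := subset_leq_card h5.
    have h7 := cardsU (nbr G2 S) (nbr G S0).
    have := h1 h2; lia.
  exists (fun i => if i \in S0 then f1 i else f2 i); split.
    move=> i i' iR i'R /=.
    case: (boolP (i \in S0)) => iS0; case: (boolP (i' \in S0)) => i'S0.
    + exact: inj1.
    + move=> e; have N1 : f1 i \in nbr G S0 by apply/nbrP; exists i => //; exact: G1.
      have := G2f i'; rewrite !inE i'S0 i'R => /(_ isT) /andP[_].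
      by rewrite -e N1.
    + move=> e; have N1 : f1 i' \in nbr G S0 by apply/nbrP; exists i' => //; exact: G1.
      have := G2f i; rewrite !inE iS0 iR => /(_ isT) /andP[_].
      by rewrite e N1.
    + by apply: inj2; rewrite inE ?iS0 ?i'S0 ?iR ?i'R.
  move=> i iR; case: (boolP (i \in S0)) => iS0; first exact: G1.
  by have := G2f i; rewrite !inE iS0 iR => /(_ isT) /andP[].
- rewrite negb_exists => /forallP Hnt.
  have : 0 < #|nbr G [set i0]|.
    have := HG [set i0]; rewrite cards1 sub1set Ri0; lia.
  rewrite card_gt0 => /set0Pn [j1 /nbrP [ii]]; rewrite inE => /eqP -> {ii} Gij1.
  pose G' i j := G i j && (j != j1).
  have [f' [inj' G'f]] : exists f : I -> J, {in R :\ i0 &, injective f} /\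
     (forall i, i \in R :\ i0 -> G' i (f i)).
    apply: IH.
      have := cardsD1 i0 R; rewrite Ri0; lia.
    move=> S sS.
    have [->|nS] := eqVneq S set0; first by rewrite cards0.
    have pS : S \proper R.
      rewrite properE (subset_trans sS (subsetDl _ _)) /=.
      apply/negP => /subsetP /(_ i0 Ri0) i0S.
      by move/subsetP: sS => /(_ i0 i0S); rewrite !inE eqxx.
    have := Hnt S; rewrite pS nS /= -ltnNge => h.
    have h5 : nbr G S \subset nbr G' S :|: [set j1].
      apply/subsetP => j /nbrP [i2 iS Gij]; rewrite !inE.
      case: (eqVneq j j1) => [->|ne]; rewrite ?eqxx ?orbT //= orbF.
      by apply/existsP; exists i2; rewrite iS /G' Gij ne.
    have h6 := subset_leq_card h5.
    have h7 := cardsU (nbr G' S) [set j1]; rewrite cards1 in h7.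
    lia.
  exists (fun i => if i == i0 then j1 else f' i); split.
    move=> i i' iR i'R /=.
    case: (eqVneq i i0) => [->|ne]; case: (eqVneq i' i0) => [->|ne'] //.
    + move=> e; have := G'f i'; rewrite !inE ne' i'R => /(_ isT) /andP[_].
      by rewrite e eqxx.
    + move=> e; have := G'f i; rewrite !inE ne iR => /(_ isT) /andP[_].
      by rewrite e eqxx.
    + by apply: inj'; rewrite !inE ?ne ?ne' ?iR ?i'R.
  move=> i iR; case: (eqVneq i i0) => [->|ne]; first by [].
  by have := G'f i; rewrite !inE ne iR => /(_ isT) /andP[].
Qed.
End Hall.

Section HungS.
Import Order.TTheory GRing.Theory Num.Theory.

Section Hung.
Variables (T : finType) (t0 : T) (P : T -> T -> nat).
Local Open Scope ring_scope.

Lemma sumz (I : finType) (F : I -> nat) :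
  (\sum_i F i)%N%:Z = \sum_i (F i)%:Z.
Proof. elim/big_rec2: _ => // i a b _ <-. by rewrite PoszD. Qed.

Definition cover (u v : T -> int) := forall i j, (P i j)%:Z <= u i + v j.
Definition total (u v : T -> int) := \sum_i u i + \sum_j v j.

Lemma total_ge0 u v : cover u v -> 0 <= total u v.
Proof.
move=> cov; rewrite /total -big_split /=.
apply: sumr_ge0 => i _; apply: le_trans (cov i i); by [].
Qed.

Definition tight (u v : T -> int) i j := u i + v j == (P i j)%:Z.

Lemma step u v : cover u v ->
  (exists f : T -> T, injective f /\ total u v = (\sum_i P i (f i))%N%:Z) \/
  (exists u' v', cover u' v' /\ total u' v' < total u v).
Proof.
move=> cov.
case: (boolP [forall S : {set T}, (#|S| <= #|nbr (tight u v) S|)%N]).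
- move/forallP => H; left.
  have [f [finj fG]] := hall_gen t0 (leqnn #|[set: T]|) (fun S _ => H S).
  have injf : injective f by move=> a b; apply: finj; rewrite inE.
  exists f; split => //.
  rewrite sumz /total [\sum_j v j](reindex_inj injf) -big_split /=.
  apply: eq_bigr => i _; have := fG i; rewrite inE => /(_ isT) /eqP -> //.

- case/forallPn => S; rewrite -ltnNge => hS; right.
  set N := nbr (tight u v) S.
  exists (fun i => u i - (i \in S)%:Z), (fun j => v j + (j \in N)%:Z); split.
    move=> i j /=.
    case: (boolP (i \in S)) => iS; case: (boolP (j \in N)) => jN /=.
    + by have := cov i j; lia.
    + have : ~~ tight u v i j.
        apply: contra jN => t; apply/nbrP; exists i => //.
      rewrite /tight => /eqP ne.
      have := cov i j; lia.
    + by have := cov i j; lia.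
    + by have := cov i j; lia.
  rewrite /total !big_split /= !sumrN.
  have e1 : \sum_i ((i \in S) : nat)%:Z = (#|S|)%:Z.
    rewrite -sumz -sum1_card; congr Posz; rewrite [RHS]big_mkcond /=.
    by apply: eq_bigr => i _; case: (i \in S).
  have e2 : \sum_i ((i \in N) : nat)%:Z = (#|N|)%:Z.
    rewrite -sumz -sum1_card; congr Posz; rewrite [RHS]big_mkcond /=.
    by apply: eq_bigr => i _; case: (i \in N).
  rewrite e1 e2. move: hS; rewrite -/N. set a := \sum_i u i. set b := \sum_i v i. set c := #|S|. set d := #|N|. clearbody a b c d => h.
  have E : forall (a b : int), a - c%:Z + (b + d%:Z) < a + b by move=> *; lia.
  exact: E.
Qed.

Lemma hung_aux n : forall u v, cover u v -> total u v <= n%:Z ->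
  exists f : T -> T, injective f /\ exists u' v', cover u' v' /\
     total u' v' = (\sum_i P i (f i))%N%:Z.
Proof.
elim: n => [|n IH] u v cov tot.
  case: (step cov) => [[f [fi e]]|[u' [v' [cov' lt]]]].
    by exists f; split => //; exists u, v.
  have := total_ge0 cov'; lia.
case: (step cov) => [[f [fi e]]|[u' [v' [cov' lt]]]].
  by exists f; split => //; exists u, v.
apply: (IH u' v') => //; lia.
Qed.

Lemma hung : exists f : T -> T, injective f /\ exists u v, cover u v /\
     total u v = (\sum_i P i (f i))%N%:Z.
Proof.
pose u0 i := (\sum_j P i j)%N%:Z.
have cov : cover u0 (fun _ => 0).
  move=> i j; rewrite addr0 /u0 lez_nat.
  by rewrite (bigD1 j) //= leq_addr.
have := total_ge0 cov.
case E: (total u0 (fun _ => 0)) => [n|n] // _.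
by apply: (hung_aux cov); rewrite E.
Qed.
End Hung.

Section NatCover.
Variables (T : finType) (t0 : T) (P : T -> T -> nat).
Local Open Scope ring_scope.

Lemma nat_cover : exists f : T -> T, injective f /\ exists un vn : T -> nat,
  (forall i j, (P i j <= un i + vn j)%N) /\
  (\sum_i un i + \sum_j vn j = \sum_i P i (f i))%N.
Proof.
have [f [injf [u [v [cov tot]]]]] := hung t0 P.
exists f; split => //.
have [j0 _ minv] := @arg_minP _ _ _ t0 predT v isT.
set c := v j0 in minv.
have hu : forall i, 0 <= u i + c by move=> i; have := cov i j0; lia.
have hv : forall j, 0 <= v j - c by move=> j; have := minv j isT; lia.
exists (fun i => absz (u i + c)), (fun j => absz (v j - c)); split.
  move=> i j; rewrite -lez_nat PoszD !gez0_abs ?hu ?hv //.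
  by have := cov i j; lia.
apply/eqP; rewrite -eqz_nat PoszD -tot !sumz /total.
have E1 : \sum_i (absz (u i + c))%:Z = \sum_i (u i + c).
  by apply: eq_bigr => i _; rewrite gez0_abs ?hu.
have E2 : \sum_i (absz (v i - c))%:Z = \sum_i (v i - c).
  by apply: eq_bigr => i _; rewrite gez0_abs ?hv.
rewrite E1 E2.
rewrite !big_split /= sumrN.
set a := \sum_i u i; set b := \sum_i v i; set d := \sum_(i : T) c.
by apply/eqP; rewrite addrACA subrr addr0.
Qed.
End NatCover.

End HungS.

Lemma alg1 k l n q r s t X Y : s + X = n * k -> t + Y = n * l ->
 s * ((q * n + r) * l) <= q * (s * t) + Y * ((q * n + r) * k) ->
 k * l * n * r <= q * X * Y + r * (X * l + Y * k).
Proof.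
move=> e1 e2 h.
have E1 : s * ((q * n + r) * l) = q * s * t + q * s * Y + s * r * l.
  have -> : (q * n + r) * l = q * (n * l) + r * l by ring.
  rewrite -e2; ring.
have E2 : Y * ((q * n + r) * k) = q * Y * s + q * Y * X + Y * r * k.
  have -> : (q * n + r) * k = q * (n * k) + r * k by ring.
  rewrite -e1; ring.
have E3 : k * l * n * r = r * l * s + r * l * X.
  have -> : k * l * n * r = r * l * (n * k) by ring.
  rewrite -e1; ring.
lia.
Qed.

Lemma cst N c : N * c = \sum_(i < N) c.
Proof. by rewrite sum_nat_const card_ord. Qed.

Lemma ineq (k l n m q r x y : nat) :
  0 < k -> k <= l -> 1 <= n ->
  m = q * n + r -> r < n ->
  (forall x' y' : nat, r * k <= x' -> r * l <= y' ->
     k * l * n * r <= q * x' * y' + r * (x' * l + y' * k) ->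
     x + y <= x' + y') ->
  forall (A : 'M[nat]_(n * k, n * l)),
  (forall i : 'I_(n * k), \sum_(j < n * l) A i j = m * l) ->
  (forall j : 'I_(n * l), \sum_(i < n * k) A i j = m * k) ->
  forall (u : 'I_(n * k) -> nat) (v : 'I_(n * l) -> nat),
  (forall i j, A i j <= u i + v j) ->
  minn (n * k * (q + 1)) (n * k * q + x + y) <= \sum_i u i + \sum_j v j.
Proof.
move=> k0 kl n1 em rn hmin A rows cols u v cov.
have nk0 : 0 < n * k by rewrite muln_gt0 k0; lia.
have nl0 : 0 < n * l by rewrite muln_gt0; lia.
pose i0 := Ordinal nk0; pose j0 := Ordinal nl0.
have [ia _ minu] := arg_minnP u (isT : predT i0).
have [jb _ minv] := arg_minnP v (isT : predT j0).
set a := u ia in minu; set b := v jb in minv.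
set U := \sum_i u i; set V := \sum_j v j.
have F1 : n * k * a <= U.
  rewrite /U (cst (n * k) a); apply: leq_sum => i _.
  exact: minu.
have F1' : n * l * b <= V.
  rewrite /V (cst (n * l) b); apply: leq_sum => i _.
  exact: minv.
have F2 : m * l <= n * l * a + V.
  rewrite -(rows ia) /V (cst (n * l) a) -big_split /=.
  by apply: leq_sum => j _; apply: cov.
have F3 : m * k <= U + n * k * b.
  rewrite -(cols jb) /U (cst (n * k) b) -big_split /=.
  by apply: leq_sum => i _; apply: cov.
have klm : n * k * b <= n * l * b by rewrite leq_mul2r leq_mul2l kl !orbT.
have kla : n * k * a <= n * l * a by rewrite leq_mul2r leq_mul2l kl !orbT.
have nkl : n * k <= n * l by rewrite leq_mul2l kl orbT.
case: (ltngtP (a + b) q) => hab.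
-
  apply: leq_trans (geq_minl _ _) _.
  have P1 : n * l * (a + b) + n * l <= n * l * q.
    by rewrite -mulnSr leq_mul2l hab orbT.
  have e1 : m * l = q * (n * l) + r * l by rewrite em; ring.
  have e2 : m * k = q * (n * k) + r * k by rewrite em; ring.
  have e3 : n * k * (q + 1) = q * (n * k) + n * k by ring.
  have e4 : n * l * (a + b) = n * l * a + n * l * b by ring.
  have e5 : n * l * q = q * (n * l) by ring.
  lia.
-
  apply: leq_trans (geq_minl _ _) _.
  have : n * k * (q + 1) <= n * k * (a + b) by rewrite leq_mul2l addn1 hab orbT.
  have e4 : n * k * (a + b) = n * k * a + n * k * b by ring.
  lia.
-
  apply: leq_trans (geq_minr _ _) _.
  pose s := \sum_i (u i == a : nat); pose X := \sum_i (u i != a : nat).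
  pose t := \sum_j (v j == b : nat); pose Y := \sum_j (v j != b : nat).
  have esX : s + X = n * k.
    rewrite /s /X -big_split /= -[RHS]card_ord -sum1_card.
    by apply: eq_bigr => i _; case: (u i == a).
  have etY : t + Y = n * l.
    rewrite /t /Y -big_split /= -[RHS]card_ord -sum1_card.
    by apply: eq_bigr => i _; case: (v i == b).
  have UX : n * k * a + X <= U.
    rewrite /U /X (cst (n * k) a) -big_split /=.
    apply: leq_sum => i _; have := minu i isT.
    by case: eqP => [->|ne] /=; lia.
  have VY : n * l * b + Y <= V.
    rewrite /V /Y (cst (n * l) b) -big_split /=.
    apply: leq_sum => i _; have := minv i isT.
    by case: eqP => [->|ne] /=; lia.
  have blk : s * (m * l) <= q * (s * t) + Y * (m * k).
    have L : s * (m * l) = \sum_i (u i == a : nat) * \sum_j A i j.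
      by rewrite /s big_distrl; apply: eq_bigr => i _ /=; rewrite rows.
    have R1 : q * (s * t) = \sum_i \sum_j (u i == a : nat) * ((v j == b : nat) * q).
      rewrite mulnC /s /t big_distrlr big_distrl /=; apply: eq_bigr => i _.
      rewrite big_distrl /=; apply: eq_bigr => j _; ring.
    have R2 : Y * (m * k) = \sum_i \sum_j (v j != b : nat) * A i j.
      rewrite /Y big_distrl exchange_big /=; apply: eq_bigr => j _.
      by rewrite -(cols j) big_distrr.
    rewrite L R1 R2 -big_split /=; apply: leq_sum => i _.
    rewrite big_distrr -big_split /=; apply: leq_sum => j _.
    have := cov i j.
    case: (eqVneq (u i) a) => [ea|na]; case: (eqVneq (v j) b) => [eb|nb] /=; try lia.
  have blk' : s * ((q * n + r) * l) <= q * (s * t) + Y * ((q * n + r) * k).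
    by rewrite -em.
  have key := alg1 esX etY blk'.
  pose x' := maxn X (r * k); pose y' := maxn Y (r * l).
  have hxy : x + y <= x' + y'.
    apply: hmin; [exact: leq_maxr | exact: leq_maxr |].
    apply: leq_trans key _.
    have h1 : X <= x' := leq_maxl _ _.
    have h2 : Y <= y' := leq_maxl _ _.
    apply: leq_add; first by rewrite leq_mul // leq_mul.
    by rewrite leq_mul2l; apply/orP; right; apply: leq_add; rewrite leq_mul2r ?h1 ?h2 orbT.
  have e2 : m * k = q * (n * k) + r * k by rewrite em; ring.
  have e1 : m * l = q * (n * l) + r * l by rewrite em; ring.
  have Ux : n * k * a + x' <= U.
    have : m * k = n * k * a + n * k * b + r * k by rewrite e2 -hab; ring.
    rewrite /x'; lia.
  have Vy : n * l * b + y' <= V.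
    have : m * l = n * l * a + n * l * b + r * l by rewrite e1 -hab; ring.
    rewrite /y'; lia.
  have : n * k * q = n * k * a + n * k * b by rewrite -hab; ring.
  lia.
Qed.

Theorem theorem2p6 (k l n m q r x y : nat) :
  0 < k -> k <= l -> coprime k l -> 1 <= n ->
  m = q * n + r -> r < n ->
  r * k <= x -> r * l <= y ->
  k * l * n * r <= q * x * y + r * (x * l + y * k) ->
  (forall x' y' : nat, r * k <= x' -> r * l <= y' ->
     k * l * n * r <= q * x' * y' + r * (x' * l + y' * k) ->
     x + y <= x' + y') ->
  forall A : 'M[nat]_(n * k, n * l), inD k l m n A ->
    minn (n * k * (q + 1)) (n * k * q + x + y) <= tdet A.
Proof.
move=> k0 kl _ n1 em rn _ _ _ hmin A [rows cols].
have nl0 : 0 < n * l by rewrite muln_gt0; lia.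
have le : n * k <= n * l by rewrite leq_mul2l kl orbT.
pose P (i j : 'I_(n * l)) := oapp (fun i' : 'I_(n * k) => A i' j) 0 (insub (val i)).
have [f [finj [un [vn [cov tot]]]]] := nat_cover (Ordinal nl0) P.
pose w := widen_ord le.
have PA : forall i j, P (w i) j = A i j.
  by move=> i j; rewrite /P /= (_ : insub (val i) = Some i) //; apply: valK.
have P0 : forall i j : 'I_(n * l), ~~ (i < n * k) -> P i j = 0.
  by move=> i j h; rewrite /P insubF //; apply: negbTE.
pose g := fun i => f (w i).
have ginj : injective g.
  by move=> a b /finj /(congr1 val) /= e; apply: val_inj.
have H1 := @ineq k l n m q r x y k0 kl n1 em rn hmin A rows cols
   (fun i => un (w i)) vn (fun i j => ltac:(rewrite -PA; exact: cov)).
apply: leq_trans H1 _.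
have S1 : \sum_(i < n * k) un (w i) <= \sum_i un i.
  rewrite -(big_ord_narrow le) [X in _ <= X](bigID (fun i : 'I_(n * l) => i < n * k)) /=.
  exact: leq_addr.
have S2 : \sum_i P i (f i) = \sum_(i < n * k) A i (g i).
  rewrite (bigID (fun i : 'I_(n * l) => i < n * k)) /= [X in _ + X]big1 ?addn0.
    by rewrite (big_ord_narrow le); apply: eq_bigr => i _; rewrite PA.
  by move=> i /P0 ->.
apply: leq_trans (_ : \sum_(i < n * k) A i (g i) <= _).
  by rewrite -S2 -tot leq_add2r.
rewrite /tdet le.
have gi : injectiveb [ffun i => g i].
  by apply/injectiveP => a b; rewrite !ffunE; apply: ginj.
apply: leq_trans (leq_bigmax_cond _ gi).
by rewrite leq_eqVlt; apply/orP; left; apply/eqP; apply: eq_bigr => i _; rewrite ffunE.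
Qed.
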